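(* For every $g\ge 2$, the Pearson degree correlation coefficient of $\mathcal{F}_g$ is $$r(\mathcal{F}_g)=\frac{(g-1)^2}{-3\cdot 2^g+g^2+2g+3}.$$
   Context: $\mathcal{F}_1$ is the 4-cycle; for $g>1$, $\mathcal{F}_g$ is obtained from $\mathcal{F}_{g-1}$ by replacing each edge $\{u,v\}$ with two new vertices each adjacent to both $u$ and $v$ (the edge $\{u,v\}$ itself is deleted). For a graph with $E$ edges whose $i$-th edge has endpoint degrees $j_i,k_i$, the Pearson correlation coefficient is $$r=\frac{E\sum_{i=1}^E j_ik_i-\left[\sum_{i=1}^E\frac12(j_i+k_i)\right]^2}{E\sum_{i=1}^E\frac12(j_i^2+k_i^2)-\left[\sum_{i=1}^E\frac12(j_i+k_i)\right]^2}.$$ *)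

(* Defs.v *)
From mathcomp Require Import all_boot all_order all_algebra.
Set Implicit Arguments. Unset Strict Implicit. Unset Printing Implicit Defensive.
Import Order.TTheory GRing.Theory Num.Theory.

(* A (simple, loopless) graph on vertex set {0,..,nv-1}, given by its edge
   list: each edge {u,v} appears exactly once as a pair (u,v). *)
Record graph := Graph { nv : nat; edges : seq (nat * nat) }.

Definition deg (G : graph) (x : nat) : nat :=
  count (fun e : nat * nat => (e.1 == x) || (e.2 == x)) (edges G).

Definition C4 : graph := Graph 4 [:: (0, 1); (1, 2); (2, 3); (3, 0)]%N.

(* Replace each edge {u,v} of the list by two fresh vertices w, w', each
   adjacent to both u and v; fresh vertices are numbered from [k] on. *)
Fixpoint subdiv_edges (k : nat) (E : seq (nat * nat)) : seq (nat * nat) :=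
  match E with
  | [::] => [::]
  | (u, v) :: E' =>
      [:: (u, k); (k, v); (u, k.+1); (k.+1, v)] ++ subdiv_edges k.+2 E'
  end.

Definition step (G : graph) : graph :=
  Graph (nv G + 2 * size (edges G)) (subdiv_edges (nv G) (edges G)).

Definition F (g : nat) : graph := iter g.-1 step C4.

Local Open Scope ring_scope.

Definition pearson (G : graph) : rat :=
  let E := (size (edges G))%:R : rat in
  let j (e : nat * nat) := (deg G e.1)%:R : rat in
  let k (e : nat * nat) := (deg G e.2)%:R : rat in
  let S1 := \sum_(e <- edges G) j e * k e in
  let S2 := \sum_(e <- edges G) (j e + k e) / 2 in
  let S3 := \sum_(e <- edges G) (j e ^+ 2 + k e ^+ 2) / 2 in
  (E * S1 - S2 ^+ 2) / (E * S3 - S2 ^+ 2).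

(* Main.v *)
Require Import Defs.
From mathcomp Require Import all_boot all_order all_algebra.
Import Order.TTheory GRing.Theory Num.Theory.
From mathcomp Require Import zify ring lra.

Definition Px (x : nat) := fun e : nat * nat => (e.1 == x) || (e.2 == x).

Lemma cnt_old k E x : (x < k)%N -> all (fun e : nat * nat => e.1 != e.2) E ->
  count (Px x) (subdiv_edges k E) = (2 * count (Px x) E)%N.
Proof.
elim: E k => [|[u v] E IH] k //= xk /andP[uv hE].
rewrite IH; last by [] ; last by lia.
rewrite /Px /=.
have -> : (k == x) = false by apply/eqP; lia.
have -> : (k.+1 == x) = false by apply/eqP; lia.
rewrite orbF /=.
case: (eqVneq u x) => [hu|_]; case: (eqVneq v x) => [hv|_] /=; try lia.

Qed.

Lemma cnt_new k E x : all (fun e : nat * nat => (e.1 != x) && (e.2 != x)) E ->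
  count (Px x) (subdiv_edges k E) = (2 * ((k <= x) && (x < k + 2 * size E)))%N.
Proof.
elim: E k => [|[u v] E IH] k /=. by rewrite addn0; case: (ltnP x k).
move=> /andP[/andP[/negbTE ux /negbTE vx] hE].
rewrite IH // /Px /= ux vx /=.
rewrite orbF.
case: (ltngtP x k) => h; case: (eqVneq k.+1 x) => h2 /=; lia.
Qed.

Lemma wf_sub k E : all (fun e : nat * nat => (e.1 < k) && (e.2 < k)) E ->
  all (fun e : nat * nat => [&& e.1 < k + 2 * size E, e.2 < k + 2 * size E & e.1 != e.2])
    (subdiv_edges k E).
Proof.
elim: E k => [|[u v] E IH] k //= /andP[/andP[uk vk] hE].
have hE' : all (fun e : nat * nat => (e.1 < k.+2) && (e.2 < k.+2)) E.
  by apply: sub_all hE => e /andP[a b]; apply/andP; split; lia.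
have := IH _ hE'.
have -> : (k.+2 + 2 * size E = k + 2 * (size E).+1)%N by lia.
move=> ->; rewrite andbT.
repeat (apply/andP; split); try lia; apply/eqP; lia.
Qed.

Definition wf (G : graph) :=
  all (fun e : nat * nat => [&& e.1 < nv G, e.2 < nv G & e.1 != e.2]) (edges G).

Lemma wf_step G : wf G -> wf (step G).
Proof.
move=> h; rewrite /wf /=.
have := @wf_sub (nv G) (edges G).
apply. by apply: sub_all h => e /and3P[a b _]; rewrite a b.
Qed.

Lemma deg_old G x : wf G -> (x < nv G)%N -> deg (step G) x = (2 * deg G x)%N.
Proof.
move=> h xk; rewrite /deg /=; apply: (@cnt_old (nv G) (edges G) x xk).
by apply: sub_all h => e /and3P[].
Qed.

Lemma deg_new G x : wf G -> (nv G <= x < nv G + 2 * size (edges G))%N ->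
  deg (step G) x = 2%N.
Proof.
move=> h hx; rewrite /deg /=. rewrite (@cnt_new (nv G) (edges G) x).
  by rewrite hx.
apply: sub_all h => e /and3P[a b _]; apply/andP; split; apply/eqP; lia.
Qed.

Local Open Scope ring_scope.

Lemma big_sub (D D0 : nat -> nat) (h : nat -> nat -> rat) k E :
  (forall x, (k <= x < k + 2 * size E)%N -> D x = 2%N) ->
  (forall e, e \in E -> D e.1 = (2 * D0 e.1)%N /\ D e.2 = (2 * D0 e.2)%N) ->
  \sum_(e <- subdiv_edges k E) h (D e.1) (D e.2) =
  \sum_(e <- E) (h (2 * D0 e.1)%N 2%N + h 2%N (2 * D0 e.2)%N) *+ 2.
Proof.
elim: E k => [|[u v] E IH] k hn ho; first by rewrite !big_nil.
rewrite /= !big_cons (IH k.+2).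
- have [-> ->] := ho (u, v) (mem_head _ _).
  rewrite (hn k) ?(hn k.+1) /=; try lia.
  by rewrite mulr2n !addrA.
- move=> x /andP[a b]; apply: hn => /=; set s := size E in b *; apply/andP; split; lia.
- by move=> e he; apply: ho; rewrite in_cons he orbT.
Qed.

Lemma sum_lin (E : seq (nat * nat)) (f g : nat * nat -> rat) (a b : rat) :
  (forall e, f e = a * g e + b) ->
  \sum_(e <- E) f e = a * \sum_(e <- E) g e + b * (size E)%:R.
Proof.
move=> H; elim: E => [|e E IH]; first by rewrite !big_nil /=; ring.
rewrite !big_cons IH H /= -natr1; ring.
Qed.

Lemma size_sub k E : size (subdiv_edges k E) = (4 * size E)%N.
Proof. elim: E k => [|[u v] E IH] k //=; rewrite IH; lia. Qed.

Definition Ed (G : graph) : rat := (size (edges G))%:R.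
Definition SA (G : graph) : rat :=
  \sum_(e <- edges G) ((deg G e.1)%:R + (deg G e.2)%:R).
Definition SB (G : graph) : rat :=
  \sum_(e <- edges G) ((deg G e.1)%:R ^+ 2 + (deg G e.2)%:R ^+ 2).

Section StepG.
Variable G : graph.
Hypothesis hG : wf G.

Let hn : forall x, (nv G <= x < nv G + 2 * size (edges G))%N -> deg (step G) x = 2%N.
Proof. by move=> x hx; apply: deg_new. Qed.
Let ho : forall e, e \in edges G ->
  deg (step G) e.1 = (2 * deg G e.1)%N /\ deg (step G) e.2 = (2 * deg G e.2)%N.
Proof.
move=> e he; have /and3P[a b _] := allP hG e he.
by split; apply: deg_old.
Qed.

Lemma Ed_step : Ed (step G) = 4 * Ed G.
Proof. by rewrite /Ed /= size_sub natrM. Qed.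

Lemma SA_step : SA (step G) = 4 * SA G + 8 * Ed G.
Proof.
rewrite /SA /= (@big_sub _ _ (fun a b => a%:R + b%:R) _ _ hn ho).
apply: sum_lin => e; rewrite !natrM; ring.
Qed.

Lemma SB_step : SB (step G) = 8 * SB G + 16 * Ed G.
Proof.
rewrite /SB /= (@big_sub _ _ (fun a b => a%:R ^+ 2 + b%:R ^+ 2) _ _ hn ho).
apply: sum_lin => e; rewrite !natrM; ring.
Qed.

Lemma pearson_step : pearson (step G) =
  (4 * Ed G * (8 * SA G) - (2 * SA G + 4 * Ed G) ^+ 2) /
  (4 * Ed G * (4 * SB G + 8 * Ed G) - (2 * SA G + 4 * Ed G) ^+ 2).
Proof.
rewrite /pearson; cbv beta zeta.
rewrite (@big_sub _ _ (fun a b => a%:R * b%:R) _ _ hn ho).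
rewrite (@big_sub _ _ (fun a b => (a%:R + b%:R) / 2) _ _ hn ho).
rewrite (@big_sub _ _ (fun a b => (a%:R ^+ 2 + b%:R ^+ 2) / 2) _ _ hn ho).
rewrite (@sum_lin _ (fun e => ((2 * deg G e.1)%N%:R * 2%N%:R + 2%N%:R * (2 * deg G e.2)%N%:R) *+ 2) (fun e => (deg G e.1)%:R + (deg G e.2)%:R) 8 0); last first.
  by move=> e; rewrite !natrM; field.
rewrite (@sum_lin _ (fun e => (((2 * deg G e.1)%N%:R + 2%N%:R) / 2 + (2%N%:R + (2 * deg G e.2)%N%:R) / 2) *+ 2) (fun e => (deg G e.1)%:R + (deg G e.2)%:R) 2 4); last first.
  by move=> e; rewrite !natrM; field.
rewrite (@sum_lin _ (fun e => (((2 * deg G e.1)%N%:R ^+ 2 + 2%N%:R ^+ 2) / 2 + (2%N%:R ^+ 2 + (2 * deg G e.2)%N%:R ^+ 2) / 2) *+ 2) (fun e => (deg G e.1)%:R ^+ 2 + (deg G e.2)%:R ^+ 2) 4 8); last first.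
  by move=> e; rewrite !natrM; field.
rewrite -/(SA G) -/(SB G) -/(Ed G).
have -> : (size (edges (step G)))%:R = 4 * Ed G by rewrite -Ed_step.
by rewrite mul0r addr0.
Qed.
End StepG.

Lemma FS n : F n.+2 = step (F n.+1).
Proof. by []. Qed.

Lemma F_props n : wf (F n.+1) /\ Ed (F n.+1) = (2 ^+ n.+1) ^+ 2 /\
  SA (F n.+1) = (2 ^+ n.+1) ^+ 2 * (2 * (n.+1)%:R + 2) /\
  SB (F n.+1) = 6 * (2 ^+ n.+1) ^+ 3 - 4 * (2 ^+ n.+1) ^+ 2.
Proof.
elim: n => [|n [w [e [a b]]]].
  have dd : forall x, (x < 4)%N -> deg (F 1) x = 2%N by case=> [|[|[|[|]]]].
  split; first by [].
  split; first by rewrite /Ed /=; ring.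
  split; first by rewrite /SA /= !big_cons big_nil /= !dd //; ring.
  by rewrite /SB /= !big_cons big_nil /= !dd //; ring.
rewrite FS; split; first exact: wf_step.
rewrite Ed_step // SA_step // SB_step // e a b !exprS -!natr1; split; first ring.
split; ring.
Qed.

Lemma ineq n : ((n.+2) ^ 2 + 2 * n.+2 + 3 < 3 * 2 ^ n.+2)%N.
Proof.
elim: n => [|n IH]; first by [].
have := @ltn_expl 2 n.+2 isT.
rewrite (expnS 2 n.+2) -!mulnn in IH *.
nia.
Qed.

Theorem proposition5 (g : nat) : (2 <= g)%N ->
  pearson (F g) =
    ((g%:R - 1) ^+ 2) / (- 3 * 2 ^+ g + g%:R ^+ 2 + 2 * g%:R + 3) :> rat.
Proof.
case: g => [|[|n]] // _.
have [w [e [a b]]] := F_props n.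
rewrite FS pearson_step // e a b.
have hi := ineq n.
have hr : ((n.+2)%:R ^+ 2 + 2 * (n.+2)%:R + 3 : rat) < 3 * 2 ^+ n.+2.
  move: hi; rewrite -(ltr_nat rat); move: (n.+2) => m.
  rewrite !natrD !natrM natrX => h; nra.
rewrite !(exprS 2 n.+1) in hr *.
set t := (2 : rat) ^+ n.+1 in hr *.
have t0 : t != 0 by rewrite expf_neq0.
rewrite -!natr1.
set x := (n%:R : rat).
have hD : - 3 * (2 * t) + (x + 1 + 1) ^+ 2 + 2 * (x + 1 + 1) + 3 != 0.
  rewrite lt_eqF //; lra.
field.
apply/andP; split; first exact: hD.
match goal with |- is_true (?L != 0) =>
  have -> : L = 16 * t ^+ 4 * - (-3 * (2 * t) + (x + 1 + 1) ^+ 2 + 2 * (x + 1 + 1) + 3) by rewrite /x; ring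
end.
by rewrite !mulf_neq0 ?oppr_eq0 ?expf_neq0.
Qed.
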